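(* Let $f: \{0, 1\}^n \to \{0, 1\}$ be a Boolean function with M\''obius support $\mathcal{S}_f$. For any two distinct sets $S,T \in \mathcal{S}_f$ there exists a set $p(\{S, T\}) \subseteq \mathcal{S}_f$ such that (i) $p(\{S, T\}) \neq \{S,T\}$; (ii) $|p(\{S, T\})| = 2$ if $S \cup T \notin \mathcal{S}_f$ and $|p(\{S, T\})| = 1$ if $S \cup T \in \mathcal{S}_f$; and (iii) $\bigcup_{U \in p(\{S, T\})} U= S \cup T$.
   Context: Every $f:\{0,1\}^n\to\{0,1\}$ has a unique M\''obius expansion $f=\sum_{S\subseteq[n]}\widetilde f(S)\mathsf{AND}_S$ with real coefficients, where $\mathsf{AND}_S(x)=\prod_{i\in S}x_i$; its M\''obius support is $\mathcal{S}_f=\{S\subseteq[n]:\widetilde f(S)\ne0\}$. *)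

(* Defs.v *)
From HB Require Import structures.
From mathcomp Require Import all_boot all_order all_algebra.
From mathcomp Require Import reals.
Set Implicit Arguments. Unset Strict Implicit. Unset Printing Implicit Defensive.
Import Order.TTheory GRing.Theory Num.Theory.
Local Open Scope ring_scope.

Definition AND_ (R : realType) (n : nat) (S : {set 'I_n}) (x : {ffun 'I_n -> bool}) : R :=
  \prod_(i in S) ((x i)%:R : R).

(* c is a Moebius expansion of f: f = sum_S c(S) AND_S  (as real-valued functions).
   Such c exists and is unique; it is "the" Moebius expansion of f. *)
Definition is_mobius_expansion (R : realType) (n : nat)
  (f : {ffun 'I_n -> bool} -> bool) (c : {set 'I_n} -> R) : Prop :=
  forall x : {ffun 'I_n -> bool}, ((f x)%:R : R) = \sum_(S : {set 'I_n}) c S * AND_ R S x.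

Definition mobius_support (R : realType) (n : nat) (c : {set 'I_n} -> R) : {set {set 'I_n}} :=
  [set S | c S != 0].

(* Main.v *)
Require Import Defs.
From HB Require Import structures.
From mathcomp Require Import all_boot all_order all_algebra.
From mathcomp Require Import reals.
Import Order.TTheory GRing.Theory Num.Theory.
Local Open Scope ring_scope.

Section Aux.
Variables (R : realType) (n : nat).
Implicit Types (S T U V W : {set 'I_n}).

Definition xW W : {ffun 'I_n -> bool} := [ffun i => i \in W].

Lemma AND_xW S W : AND_ R S (xW W) = ((S \subset W)%:R : R).
Proof.
rewrite /AND_; case: (boolP (S \subset W)) => sw.
  by apply: big1 => i iS; rewrite ffunE (subsetP sw i iS).
have [i /andP [iS iW]] : exists i, (i \in S) && (i \notin W).
  by apply/existsP; move: sw; apply: contraR; rewrite negb_exists => /forallP H;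
     apply/subsetP => i iS; move: (H i); rewrite iS /= negbK.
by rewrite (bigD1 i) //= ffunE (negbTE iW) mul0r.
Qed.

Lemma uniq0 (d : {set 'I_n} -> R) :
  (forall W, \sum_(S : {set 'I_n}) (S \subset W)%:R * d S = 0) -> forall W, d W = 0.
Proof.
move=> H W; move: {2}#|W| (leqnn #|W|) => k; elim: k W => [|k IH] W.
  rewrite leqn0 cards_eq0 => /eqP ->; move: (H set0).
  rewrite (bigD1 set0) //= sub0set mul1r big1 ?addr0 // => S SN.
  by rewrite subset0 (negbTE SN) mul0r.
move=> hW; move: (H W); rewrite (bigD1 W) //= subxx mul1r big1 ?addr0 // => S SW.
case: (boolP (S \subset W)) => sw; last by rewrite mul0r.
rewrite IH ?mulr0 //; have : S \proper W by rewrite properEneq SW sw.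
by move/proper_card => lt; rewrite -ltnS (leq_trans lt hW).
Qed.

Lemma natr_and (a b : bool) : ((a && b)%:R : R) = a%:R * b%:R.
Proof. by case: a; case: b; rewrite ?mulr0 ?mulr1. Qed.

Lemma mob_sq (f : {ffun 'I_n -> bool} -> bool) (c : {set 'I_n} -> R) :
  is_mobius_expansion f c -> forall W,
  c W = \sum_(U : {set 'I_n}) \sum_(V : {set 'I_n}) (U :|: V == W)%:R * (c U * c V).
Proof.
move=> hc W0; apply/eqP; rewrite -subr_eq0; apply/eqP; move: W0.
apply: (uniq0 (fun W => c W - _)) => W.
have hW := hc (xW W).
have e1 : \sum_(S : {set 'I_n}) (S \subset W)%:R * c S = ((f (xW W))%:R : R).
  by rewrite hW; apply: eq_bigr => S _; rewrite AND_xW mulrC.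
have e2 : \sum_(S : {set 'I_n}) (S \subset W)%:R * (\sum_(U : {set 'I_n}) \sum_(V : {set 'I_n}) (U :|: V == S)%:R * (c U * c V))
    = ((f (xW W))%:R : R) * (f (xW W))%:R.
  rewrite -e1 mulr_suml; under eq_bigr => S _ do rewrite mulr_sumr.
  rewrite exchange_big /=; apply: eq_bigr => U _.
  rewrite mulr_sumr; under eq_bigr => S _ do rewrite mulr_sumr.
  rewrite exchange_big /=; apply: eq_bigr => V _.
  rewrite (bigD1 (U :|: V)) //= eqxx mul1r big1 ?addr0.
    by rewrite subUset natr_and mulrACA.
  by move=> S /negbTE; rewrite eq_sym => ->; rewrite mul0r mulr0.
under eq_bigr => S _ do rewrite mulrBr.
rewrite sumrB e1 e2; by case: (f _); rewrite ?mulr0 ?mulr1 subrr.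
Qed.

End Aux.

Theorem claim4p5 (R : realType) (n : nat) (f : {ffun 'I_n -> bool} -> bool)
  (c : {set 'I_n} -> R) (hc : is_mobius_expansion f c) (S T : {set 'I_n}) :
  S \in mobius_support c -> T \in mobius_support c -> S != T ->
  exists p : {set {set 'I_n}},
    [/\ p \subset mobius_support c,
        p != [set S; T],
        (if S :|: T \in mobius_support c then #|p| = 1%N else #|p| = 2%N)
      & \bigcup_(U in p) U = S :|: T].
Proof.
move=> hS hT ST.
case: (boolP (S :|: T \in mobius_support c)) => hW.
  exists [set S :|: T]; split => //.
  - by rewrite sub1set.
  - by apply/negP => /eqP E; move: (cards1 (S :|: T)); rewrite E cards2 ST.
  - by rewrite cards1.
  - by rewrite big_set1.
move: hS hT; rewrite !inE => cS cT.
have cW : c (S :|: T) = 0 by apply/eqP; move: hW; rewrite inE negbK.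
have [/existsP [U /existsP [V /and5P [eUV cU cV n1 n2]]] | none] :=
  boolP [exists U, exists V, [&& U :|: V == S :|: T, c U != 0, c V != 0,
                                  (U, V) != (S, T) & (U, V) != (T, S)]].
  have UV : U != V.
    apply/negP => /eqP E; move: eUV; rewrite E setUid => /eqP E2.
    by move: cV; rewrite E2 cW eqxx.
  exists [set U; V]; split.
  - by apply/subsetP => X; rewrite !inE => /orP [] /eqP ->; rewrite ?cU ?cV.
  - apply/negP => /eqP E.
    have : U \in [set S; T] by rewrite -E !inE eqxx.
    have : V \in [set S; T] by rewrite -E !inE eqxx orbT.
    rewrite !inE => /orP [] /eqP EV /orP [] /eqP EU; subst.
    + by rewrite eqxx in UV.
    + by rewrite eqxx in n2.
    + by rewrite eqxx in n1.
    + by rewrite eqxx in UV.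
  - by rewrite cards2 UV.
  - apply/setP => i; apply/bigcupP/idP.
      by case=> X; rewrite !inE => /orP [] /eqP -> iX; rewrite -in_setU -(eqP eUV) inE iX ?orbT.
    rewrite -(eqP eUV) inE => /orP [] iX.
      by exists U; rewrite // !inE eqxx.
    by exists V; rewrite // !inE eqxx orbT.
exfalso.
have E := @mob_sq R n f c hc (S :|: T).
rewrite cW pair_bigA /= in E.
have ne : (T, S) != (S, T) by rewrite xpair_eqE negb_and eq_sym ST.
have rest : \sum_(p | (p != (S, T)) && (p != (T, S)))
    ((p.1 :|: p.2 == S :|: T)%:R * (c p.1 * c p.2)) = 0 :> R.
  apply: big1 => [[U V]] /= /andP [n1 n2].
  case: (boolP (U :|: V == S :|: T)) => eUV; last by rewrite mul0r.
  case: (boolP (c U == 0)) => [/eqP -> | cU]; first by rewrite mul0r mulr0.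
  case: (boolP (c V == 0)) => [/eqP -> | cV]; first by rewrite mulr0 mulr0.
  move/existsP: none; case; exists U; apply/existsP; exists V.
  by rewrite eUV cU cV n1 n2.
rewrite (bigD1 (S, T)) //= (bigD1 (T, S)) //= rest addr0 eqxx setUC eqxx mul1r mul1r in E.
move: E; rewrite (mulrC (c T)) -mulr2n => /esym /eqP.
by rewrite mulrn_eq0 /= mulf_eq0 (negbTE cS) (negbTE cT).
Qed.
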